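(* Let $f:\mathbb R^n\to\mathbb R$ be an integrable log-concave function with full-dimensional support. Then for any $\theta\in[0,1]$ and any $t\in(0,1]$, $$\mathcal A_t(f)(0)+_\theta\big(-\mathcal A_t(f)(0)\big)\subseteq\mathcal C_{\theta,t}(f)\subseteq\mathcal A_{t^2}(f)(0)+_{\frac{M_t(f)}{M_{t^2}(f)}\theta}\big(-\mathcal A_{t^2}(f)(0)\big).$$
   Context: For $t\in(0,1]$ and $x\in\mathrm{supp}\,f-\mathrm{supp}\,f$, $\mathcal A_t(f)(x)=\{z\in\mathrm{supp}\,f\cap(x+\mathrm{supp}\,f): f(z)f(z-x)\geq t\Vert f\Vert_\infty^2\}$ (so $\mathcal A_t(f)(0)=\{z:f(z)\geq\sqrt t\Vert f\Vert_\infty\}$); $M_t(f)=\max_{x_0}|\mathcal A_t(f)(x_0)|$ with $|\cdot|$ Lebesgue volume; and $\mathcal C_{\theta,t}(f)=\{x\in\mathrm{supp}\,f-\mathrm{supp}\,f:\ \mathcal A_t(f)(x)\neq\emptyset,\ |\mathcal A_t(f)(x)|\geq\theta M_t(f)\}$. For convex bodies $K,L$ and $\theta\in[0,1]$, the $\theta$-convolution body is $K+_\theta L=\{x\in K+L: |K\cap(x-L)|\geq\theta\max_{z\in\mathbb R^n}|K\cap(z-L)|\}$. *)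

(* Defs.v *)
From HB Require Import structures.
From mathcomp Require Import all_boot all_order all_algebra.
From mathcomp Require Import all_classical all_reals all_analysis.
Set Implicit Arguments.
Unset Strict Implicit.
Unset Printing Implicit Defensive.
Import Order.TTheory GRing.Theory Num.Theory.
Import numFieldNormedType.Exports.
Local Open Scope classical_set_scope.
Local Open Scope ring_scope.

Definition box (R : realType) (n : nat) (a b : 'rV[R]_n) : set 'rV[R]_n :=
  [set x | forall i : 'I_n, a ord0 i <= x ord0 i <= b ord0 i].

Definition box_vol (R : realType) (n : nat) (a b : 'rV[R]_n) : R :=
  \prod_(i < n) Num.max 0 (b ord0 i - a ord0 i).

(* n-dimensional Lebesgue (outer) measure |A|: infimum of the total volume of
   countable coverings of A by boxes.  It coincides with the Lebesgue measure
   on Lebesgue measurable sets (all sets below are convex, hence measurable). *)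
Definition vol (R : realType) (n : nat) (A : set 'rV[R]_n) : \bar R :=
  ereal_inf [set s | exists a b : nat -> 'rV[R]_n,
    A `<=` \bigcup_k box (a k) (b k) /\
    s = (\sum_(0 <= k <oo) (box_vol (a k) (b k))%:E)%E].

(* Lebesgue integral of a nonnegative function = (n+1)-dimensional volume of
   the region under its graph. *)
Definition integral_nonneg (R : realType) (n : nat) (f : 'rV[R]_n -> R) : \bar R :=
  vol [set v : 'rV[R]_(n + 1) | exists (x : 'rV[R]_n) (s : R),
        v = row_mx x (\row_(j < 1) s) /\ 0 <= s <= f x].

Definition lc_integrable (R : realType) (n : nat) (f : 'rV[R]_n -> R) : Prop :=
  (integral_nonneg f < +oo)%E.

Definition log_concave (R : realType) (n : nat) (f : 'rV[R]_n -> R) : Prop :=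
  (forall x, 0 <= f x) /\
  forall (x y : 'rV[R]_n) (l : R), 0 <= l <= 1 ->
    f x `^ (1 - l) * f y `^ l <= f ((1 - l) *: x + l *: y).

Definition supp (R : realType) (n : nat) (f : 'rV[R]_n -> R) : set 'rV[R]_n :=
  [set x | 0 < f x].

Definition full_dim (R : realType) (n : nat) (A : set 'rV[R]_n) : Prop :=
  interior A !=set0.

Definition sup_norm (R : realType) (n : nat) (f : 'rV[R]_n -> R) : R :=
  sup (range f).

Definition minkowski_sum (R : realType) (n : nat) (K L : set 'rV[R]_n) : set 'rV[R]_n :=
  [set x + y | x in K & y in L].

Definition refl_set (R : realType) (n : nat) (K : set 'rV[R]_n) : set 'rV[R]_n :=
  [set - y | y in K].

Definition minus_set (R : realType) (n : nat) (x : 'rV[R]_n) (L : set 'rV[R]_n) : set 'rV[R]_n :=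
  [set x - y | y in L].

Definition Aset (R : realType) (n : nat) (f : 'rV[R]_n -> R) (t : R) (x : 'rV[R]_n)
  : set 'rV[R]_n :=
  [set z | supp f z /\ supp f (z - x) /\ f z * f (z - x) >= t * sup_norm f ^+ 2].

Definition Mt (R : realType) (n : nat) (f : 'rV[R]_n -> R) (t : R) : R :=
  fine (ereal_sup [set vol (Aset f t x) | x in [set: 'rV[R]_n]]).

Definition Cset (R : realType) (n : nat) (f : 'rV[R]_n -> R) (theta t : R)
  : set 'rV[R]_n :=
  [set x | minkowski_sum (supp f) (refl_set (supp f)) x /\
           Aset f t x !=set0 /\
           (vol (Aset f t x) >= (theta * Mt f t)%:E)%E].

Definition conv_body (R : realType) (n : nat) (theta : R) (K L : set 'rV[R]_n)
  : set 'rV[R]_n :=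
  [set x | minkowski_sum K L x /\
    (vol (K `&` minus_set x L) >=
     theta%:E * ereal_sup [set vol (K `&` minus_set z L) | z in [set: 'rV[R]_n]])%E].

(* Main.v *)
Require Import Defs.
From HB Require Import structures.
From mathcomp Require Import all_boot all_order all_algebra.
From mathcomp Require Import all_classical all_reals all_analysis.
From mathcomp Require Import ring lra.
Import Order.TTheory GRing.Theory Num.Theory.
Local Open Scope classical_set_scope.
Local Open Scope ring_scope.

Section H.
Variables (R : realType) (n : nat).
Implicit Types (A B : set 'rV[R]_n).

Lemma vol_ge0 A : (0 <= vol A)%E.
Proof.
apply: le_ereal_inf_tmp => _ [a [b [_ ->]]]; apply: nneseries_ge0 => k _ _.
rewrite lee_fin; apply: prodr_ge0 => i _; by rewrite le_max lexx.
Qed.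

Lemma vol_le A B : A `<=` B -> (vol A <= vol B)%E.
Proof.
move=> AB; apply: le_ereal_inf => s [a [b [hB ->]]]; exists a, b; split => //.
exact: subset_trans hB.
Qed.

Lemma vol_trans (v : 'rV[R]_n) A : (vol [set (v + y)%R | y in A] <= vol A)%E.
Proof.
apply: le_ereal_inf => s [a [b [hA ->]]].
exists (fun k => (v + a k)%R), (fun k => (v + b k)%R); split.
  move=> _ [y Ay <-]; have [k _ hk] := hA y Ay; exists k => // i.
  rewrite !mxE; have /andP[h1 h2] := hk i; by rewrite !lerD2l h1 h2.
apply: eq_eseriesr => k _; congr (_%:E); apply: eq_bigr => i _.
by rewrite !mxE opprD addrACA subrr add0r.
Qed.

Lemma arith1 (a b c : R) : 0 < a -> 0 < b -> 0 <= c -> c <= a * a -> c <= b * b -> c <= a * b.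
Proof.
move=> ha hb hc h1 h2; rewrite leNgt; apply/negP => hlt.
have : (a * b) * (a * b) < c * c.
  have hab : 0 <= a * b by nra.
  nra.
nra.
Qed.

Lemma arith2 (a b s t : R) : 0 < a -> 0 < b -> 0 < t <= 1 ->
  t * s ^+ 2 <= a * b -> (b <= s \/ s = 0) -> t ^+ 2 * s ^+ 2 <= a * a.
Proof.
move=> ha hb /andP[ht0 ht1] h [hbs|->]; last by rewrite expr0n /= mulr0; nra.
have hs : 0 < s by apply: lt_le_trans hbs.
have : t * s <= a.
  have : t * s * s <= a * s by rewrite expr2 in h; nra.
  by rewrite ler_pM2r.
move=> h2; have h3 : 0 <= t * s by nra.
rewrite -exprMn expr2; nra.
Qed.

Variable f : 'rV[R]_n -> R.
Hypothesis hlc : log_concave f.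

Lemma fbound y : f y <= sup_norm f \/ sup_norm f = 0.
Proof.
rewrite /sup_norm; case: (pselect (has_sup (range f))) => h.
  by left; apply: sup_upper_bound => //; exists y.
by right; exact: sup_out.
Qed.

Lemma Aset_inter (t : R) (x : 'rV[R]_n) : 0 < t ->
  Aset f t 0 `&` minus_set x (refl_set (Aset f t 0)) `<=` Aset f t x.
Proof.
move=> ht w [[sw [_ hw]] [_ [y [sy [_ hy]] <-] ew]].
rewrite subr0 in hy hw.
rewrite /Aset /=.
have -> : w - x = y by rewrite -ew opprK addrC addKr.
split => //; split => //; apply: arith1 => //.
apply: mulr_ge0; [exact: ltW | exact: sqr_ge0].
by rewrite subr0 in hw.
Qed.

Lemma Aset_shift (t : R) (x : 'rV[R]_n) :
  Aset f t x `<=` [set (2^-1 *: x + y)%R | y in Aset f t 0].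
Proof.
move=> z [sz [szx hz]]; exists (z - 2^-1 *: x); last first.
  by rewrite addrC subrK.
have hl : 0 <= (2^-1 : R) <= 1 by apply/andP; split; lra.
have := hlc.2 z (z - x) _ hl.
have -> : (1 - 2^-1) *: z + 2^-1 *: (z - x) = z - 2^-1 *: x :> 'rV[R]_n.
  rewrite scalerBr addrA -scalerDl.
  have -> : (1 - 2^-1 + 2^-1 : R) = 1 by lra.
  by rewrite scale1r.
have -> : (1 - 2^-1 : R) = 2^-1 by lra.
have f0 := hlc.1.
rewrite !powR12_sqrt ?f0 // -sqrtrM ?f0 // => hs.
have hp : 0 < f z * f (z - x) by apply: mulr_gt0.
have hsq : f z * f (z - x) <= f (z - 2^-1 *: x) * f (z - 2^-1 *: x).
  rewrite -expr2 -(sqr_sqrtr (ltW hp)); apply: lerXn2r => //.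
  - by rewrite nnegrE sqrtr_ge0.
  - by rewrite nnegrE f0.
have hpos : 0 < f (z - 2^-1 *: x).
  by apply: lt_le_trans hs; rewrite sqrtr_gt0.
rewrite /Aset /= subr0; split => //; split => //; exact: le_trans hz hsq.
Qed.


Lemma Aset_sub2 (t : R) (x : 'rV[R]_n) : 0 < t <= 1 ->
  Aset f t x `<=` Aset f (t ^+ 2) 0 `&` minus_set x (refl_set (Aset f (t ^+ 2) 0)).
Proof.
move=> ht z [sz [szx hz]]; split.
  rewrite /Aset /= subr0; split => //; split => //.
  exact: arith2 sz szx ht hz (fbound _).
exists (- (z - x)); last by rewrite opprK addrC subrK.
exists (z - x) => //.
rewrite /Aset /= subr0; split => //; split => //.
apply: arith2 szx sz ht _ (fbound _); by rewrite [f (z - x) * _]mulrC.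
Qed.

Lemma supT (t : R) : 
  (ereal_sup [set vol (Aset f t x) | x in [set: 'rV[R]_n]] <= vol (Aset f t 0))%E.
Proof.
apply: ge_ereal_sup => _ [x _ <-].
exact: le_trans (vol_le _ _ (Aset_shift t x)) (vol_trans _ _).
Qed.

Lemma Mt_ge0 (t : R) : 0 <= Mt f t.
Proof.
apply: fine_ge0; apply: le_trans (vol_ge0 (Aset f t 0)) _.
by apply: ereal_sup_ubound; exists 0.
Qed.

End H.
Arguments vol_le {R n A B}.
Arguments Aset_inter {R n f t x}.
Arguments Aset_sub2 {R n f t x}.

Theorem lemma3p7 (R : realType) (n : nat) (f : 'rV[R]_n -> R)
  (hlc : log_concave f) (hint : lc_integrable f) (hfull : full_dim (supp f))
  (theta t : R) (htheta : 0 <= theta <= 1) (ht : 0 < t <= 1) :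
  conv_body theta (Aset f t 0) (refl_set (Aset f t 0)) `<=` Cset f theta t /\
  Cset f theta t `<=`
    conv_body (Mt f t / Mt f (t ^+ 2) * theta)
      (Aset f (t ^+ 2) 0) (refl_set (Aset f (t ^+ 2) 0)).
Proof.
have ht0 : 0 < t by case/andP: ht.
have th0 : 0 <= theta by case/andP: htheta.
split.
  move=> x [[a Ka [_ [b Kb <-] <-]] hv].
  split; first by exists a; [exact: Ka.1| exists (- b) => //; exists b => //; exact: Kb.1].
  split.
    exists a; apply: Aset_inter => //; split => //.
    by exists (- b); [exists b | rewrite opprK subrK].
  set K := Aset f t 0.
  set S1 := ereal_sup _ in hv.
  have hKS : (vol K <= S1)%E.
    apply: ereal_sup_ubound; exists 0 => //; apply/eqP; rewrite eq_le; apply/andP; split.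
      by apply: vol_le => w [].
    apply: vol_le => w Kw; split => //; exists (- w); [by exists w | by rewrite sub0r opprK].
  apply: le_trans (vol_le (Aset_inter ht0)); apply: le_trans hv.
  rewrite EFinM; apply: lee_wpmul2l; first by rewrite lee_fin.
  move: (@supT _ _ f hlc t); rewrite /Mt; case: (ereal_sup _) => [r| |] /= h.
  - exact: le_trans h hKS.
  - exact: le_trans (vol_ge0 _ _ _) hKS.
  - exact: le_trans (vol_ge0 _ _ _) hKS.
move=> x [_ [[z hz] hv]].
have ht2 : 0 < t ^+ 2 by rewrite exprn_gt0.
have [Kz [_ [y Ky <-] e]] := Aset_sub2 ht z hz.
split; first by exists z => //; exists (- y); [by exists y | rewrite -e opprK addrK].
apply: le_trans (vol_le (Aset_sub2 ht (x:=x))).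
apply: le_trans hv.
set K := Aset f (t ^+ 2) 0.
set S2 := ereal_sup _.
have hS2le : (S2 <= ereal_sup [set vol (Aset f (t ^+ 2) z) | z in [set: 'rV[R]_n]])%E.
  apply: ge_ereal_sup => _ [w _ <-].
  apply: le_trans (vol_le (Aset_inter ht2)) _.
  by apply: ereal_sup_ubound; exists w.
have hS2ge : (0 <= S2)%E.
  by apply: le_trans (vol_ge0 _ _ (K `&` minus_set 0 (refl_set K)) : (0 <= _)%E) _; apply: ereal_sup_ubound; exists 0.
have ha := @Mt_ge0 _ _ f t.
have hta : 0 <= theta * Mt f t by rewrite mulr_ge0.
move: hS2le; rewrite [Mt f (t ^+ 2)]/Mt.
case: (ereal_sup _) => [r| |] /= h; last 2 first.
- by rewrite invr0 mulr0 mul0r mul0e lee_fin.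
- by rewrite invr0 mulr0 mul0r mul0e lee_fin.
have [->|rn0] := eqVneq r 0.
  by rewrite invr0 mulr0 mul0r mul0e lee_fin.
move: h hS2ge; case: S2 => [s2| |] //= h1 h2.
rewrite lee_fin in h1; rewrite lee_fin in h2.
have rp : 0 < r by rewrite lt_neqAle eq_sym rn0 (le_trans h2 h1).
rewrite -EFinM lee_fin.
have -> : theta * Mt f t = Mt f t / r * theta * r by field.
apply: ler_wpM2l => //; rewrite mulr_ge0 // divr_ge0 // ltW //.
Qed.
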